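(* Let $U=\mathbb{C}^m$, $V=\mathbb{C}^2$, $W=\mathbb{C}^2$ with bases $\{u_i\}$, $\{v_j\}$, $\{w_k\}$ and dual bases $\{u^i\}$, $\{v^j\}$, $\{w^k\}$, and set $x^i_j=u^i\otimes v_j\in U^*\otimes V$, $y^j_k=v^j\otimes w_k\in V^*\otimes W$, $z^k_i=w^k\otimes u_i\in W^*\otimes U$. Let $$M_{\langle m,2,2\rangle}=\sum_{k=1}^{2}\sum_{j=1}^{2}\sum_{i=1}^{m} x^i_j\otimes y^j_k\otimes z^k_i$$ and $$T_{BCLRS,m}=M_{\langle m,2,2\rangle}-x^1_1\otimes(y^1_1\otimes z^1_1+y^1_2\otimes z^2_1)\in A\otimes B\otimes C,$$ where $A\subset U^*\otimes V$ is the $(2m-1)$-dimensional span of all $x^i_j$ with $(i,j)\neq(1,1)$, $B=V^*\otimes W\cong\mathbb{C}^4$ and $C=W^*\otimes U\cong\mathbb{C}^{2m}$. Then the border rank of $T_{BCLRS,2}$ equals $5$, and for every $m>2$ the border rank of $T_{BCLRS,m}$ is at least $3m-2$.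
   Context: A tensor in $A\otimes B\otimes C$ has rank one if it is of the form $a\otimes b\otimes c$ with $a,b,c$ nonzero. The border rank of a tensor $T$ is the smallest $r$ such that $T$ is a limit of tensors that are sums of at most $r$ rank one tensors. *)

(* Defs.v *)
From mathcomp Require Import all_boot all_algebra complex.
From mathcomp Require Import reals.
Set Implicit Arguments.
Unset Strict Implicit.
Unset Printing Implicit Defensive.
Import GRing.Theory Num.Theory.
Local Open Scope ring_scope.
Local Open Scope complex_scope.

Section Tensors.
Variable R : realType.
Local Notation C := R[i].

(* A tensor in A (x) B (x) C, given by its coordinates in fixed bases of
   A, B, C indexed by finite types IA, IB, IC. *)
Definition tensor (IA IB IC : finType) := IA -> IB -> IC -> C.

Definition rank_le (IA IB IC : finType) (T : tensor IA IB IC) (r : nat) :=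
  exists (a : 'I_r -> IA -> C) (b : 'I_r -> IB -> C) (c : 'I_r -> IC -> C),
    forall x y z, T x y z = \sum_(l < r) a l x * b l y * c l z.

(* Convergence of a sequence of tensors (Euclidean topology: coordinatewise,
   with respect to the complex modulus). *)
Definition tensor_cvg (IA IB IC : finType) (Tn : nat -> tensor IA IB IC)
    (T : tensor IA IB IC) :=
  forall eps : R, 0 < eps -> exists N : nat, forall n : nat, (N <= n)%N ->
    forall x y z, `|Tn n x y z - T x y z| < eps%:C.

Definition border_rank_le (IA IB IC : finType) (T : tensor IA IB IC) (r : nat) :=
  exists Tn : nat -> tensor IA IB IC,
    (forall n, rank_le (Tn n) r) /\ tensor_cvg Tn T.

Definition is_border_rank (IA IB IC : finType) (T : tensor IA IB IC) (r : nat) :=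
  border_rank_le T r /\ forall r', border_rank_le T r' -> (r <= r')%N.

(* Index sets: x^i_j indexed by (i,j) : 'I_m * 'I_2,
   y^j_k by (j,k) : 'I_2 * 'I_2, z^k_i by (k,i) : 'I_2 * 'I_m.
   (Indices are 0-based: the paper's index 1 is 0 here.) *)
Notation idxX m := ('I_m * 'I_2)%type.
Notation idxY := ('I_2 * 'I_2)%type.
Notation idxZ m := ('I_2 * 'I_m)%type.

(* Basis of A: the x^i_j with (i,j) <> (1,1) (0-based: (0,0)). *)
Definition notX11 (m : nat) (p : idxX m) : bool :=
  ((nat_of_ord p.1, nat_of_ord p.2) != (0%N, 0%N)).
Notation idxA m := {p : idxX m | @notX11 m p}.

Definition Mmm22 (m : nat) : tensor (idxX m) (idxY)
    (idxZ m) :=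
  fun x y z =>
    \sum_(k < 2) \sum_(j < 2) \sum_(i < m)
      ((x == (i, j)) && (y == (j, k)) && (z == (k, i)))%:R.

(* The correction term x^1_1 (x) (y^1_1 (x) z^1_1 + y^1_2 (x) z^2_1). *)
Definition corrBCLRS (m : nat) : tensor (idxX m) (idxY)
    (idxZ m) :=
  fun x y z =>
    ((nat_of_ord x.1 == 0%N) && (nat_of_ord x.2 == 0%N))%:R *
      (((nat_of_ord y.1 == 0%N) && (nat_of_ord y.2 == 0%N))%:R *
         ((nat_of_ord z.1 == 0%N) && (nat_of_ord z.2 == 0%N))%:R
     + ((nat_of_ord y.1 == 0%N) && (nat_of_ord y.2 == 1%N))%:R *
         ((nat_of_ord z.1 == 1%N) && (nat_of_ord z.2 == 0%N))%:R).

(* T_{BCLRS,m} = M_<m,2,2> - correction, viewed in A (x) B (x) C where A is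
   the span of the x^i_j, (i,j) <> (1,1) (the difference lies in A (x) B (x) C,
   so it is given by its coordinates on this basis of A). *)
Definition T_BCLRS (m : nat) : tensor (idxA m) (idxY)
    (idxZ m) :=
  fun a y z => @Mmm22 m (val a) y z - @corrBCLRS m (val a) y z.

End Tensors.

Arguments T_BCLRS R m : clear implicits.
Arguments Mmm22 R m : clear implicits.
Arguments corrBCLRS R m : clear implicits.
Arguments notX11 m p : clear implicits.

(* Main.v *)
Require Import Defs.
From mathcomp Require Import all_boot all_algebra complex.
From mathcomp Require Import reals.
From mathcomp Require Import order ring lra zify.
Set Implicit Arguments.
Unset Strict Implicit.
Unset Printing Implicit Defensive.
Import Order.TTheory GRing.Theory Num.Theory.



Section Cvg.
Local Open Scope ring_scope.
Local Open Scope complex_scope.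
Variable R : realType.
Local Notation C := R[i].

Definition nm (z : C) : R := complex.Re `|z|.

Lemma normE (z : C) : `|z| = (nm z)%:C.
Proof. by rewrite /nm RRe_real // normr_real. Qed.

Lemma nm_ge0 z : 0 <= nm z.
Proof. by rewrite -lecR -normE normr_ge0. Qed.

Lemma nmD a b : nm (a + b) <= nm a + nm b.
Proof. by rewrite -lecR rmorphD /= -!normE ler_normD. Qed.

Lemma nmM a b : nm (a * b) = nm a * nm b.
Proof. by apply: (@complexI R); rewrite rmorphM /= -!normE normrM. Qed.

Lemma nmN a : nm (- a) = nm a.
Proof. by rewrite /nm normrN. Qed.

Lemma nm0 : nm 0 = 0.
Proof. by rewrite /nm normr0. Qed.

Lemma nm_eq0 z : (nm z == 0) = (z == 0).
Proof. by rewrite -[z == 0]normr_eq0 normE -[0 : C]/((0 : R)%:C) (inj_eq (@complexI R)). Qed.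

Definition cvgc (u : nat -> C) (l : C) :=
  forall e : R, 0 < e -> exists N, forall n, (N <= n)%N -> nm (u n - l) < e.

Lemma cvgc_const c : cvgc (fun _ => c) c.
Proof. by move=> e e0; exists 0%N => n _; rewrite subrr nm0. Qed.

Lemma cvgc_add u v l k : cvgc u l -> cvgc v k -> cvgc (fun n => u n + v n) (l + k).
Proof.
move=> hu hv e e0.
have e2 : 0 < e / 2 by lra.
have [N1 h1] := hu _ e2; have [N2 h2] := hv _ e2.
exists (maxn N1 N2) => n hn.
have := h1 n (leq_trans (leq_maxl _ _) hn); have := h2 n (leq_trans (leq_maxr _ _) hn).
have -> : u n + v n - (l + k) = (u n - l) + (v n - k) by ring.
have := nmD (u n - l) (v n - k); lra.
Qed.

Lemma cvgc_opp u l : cvgc u l -> cvgc (fun n => - u n) (- l).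
Proof.
move=> hu e e0; have [N h] := hu _ e0; exists N => n hn.
by rewrite -opprD nmN; apply: h.
Qed.

Lemma cvgc_bound u l : cvgc u l -> exists N, forall n, (N <= n)%N -> nm (u n) <= nm l + 1.
Proof.
move=> hu; have [N h] := hu 1 ltr01; exists N => n hn.
have := h n hn; have := nmD (u n - l) l; rewrite subrK; lra.
Qed.

Lemma cvgc_mul u v l k : cvgc u l -> cvgc v k -> cvgc (fun n => u n * v n) (l * k).
Proof.
move=> hu hv e e0.
have [N0 hb] := cvgc_bound hu.
have hl := nm_ge0 l; have hk := nm_ge0 k.
have e1 : 0 < e / (2 * (nm l + 1)).
  apply: divr_gt0 => //; lra.
have e2 : 0 < e / (2 * (nm k + 1)).
  apply: divr_gt0 => //; lra.
have [N1 h1] := hv _ e1; have [N2 h2] := hu _ e2.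
exists (maxn N0 (maxn N1 N2)) => n hn.
have hn0 := leq_trans (leq_maxl _ _) hn.
have hn' := leq_trans (leq_maxr _ _) hn.
have hn1 := leq_trans (leq_maxl _ _) hn'.
have hn2 := leq_trans (leq_maxr _ _) hn'.
have -> : u n * v n - l * k = u n * (v n - k) + (u n - l) * k by ring.
have := nmD (u n * (v n - k)) ((u n - l) * k); rewrite !nmM.
have A := h1 n hn1; have B := h2 n hn2; have D := hb n hn0.
have Q1 : (nm l + 1) * (e / (2 * (nm l + 1))) = e / 2 by field; lra.
have Q2 : (e / (2 * (nm k + 1))) * (nm k + 1) = e / 2 by field; lra.
have X1 := nm_ge0 (v n - k); have X2 := nm_ge0 (u n - l); have X3 := nm_ge0 (u n).
set a1 := e / (2 * (nm l + 1)) in e1 A Q1.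
set a2 := e / (2 * (nm k + 1)) in e2 B Q2.
nra.
Qed.

Lemma cvgc_ext u v l : (forall n, u n = v n) -> cvgc u l -> cvgc v l.
Proof. by move=> e h eps he; have [N hN] := h _ he; exists N => n hn; rewrite -e; apply: hN. Qed.

Lemma cvgc_sum (I : Type) (s : seq I) (P : pred I) (F : nat -> I -> C) (G : I -> C) :
  (forall i, cvgc (fun n => F n i) (G i)) ->
  cvgc (fun n => \sum_(i <- s | P i) F n i) (\sum_(i <- s | P i) G i).
Proof.
move=> h; elim: s => [|a s IH].
  rewrite big_nil; apply: (@cvgc_ext (fun _ => 0)); last exact: cvgc_const.
  by move=> n; rewrite big_nil.
rewrite big_cons; case: ifP => Pa.
  apply: (@cvgc_ext (fun n => F n a + \sum_(i <- s | P i) F n i)).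
    by move=> n; rewrite big_cons Pa.
  exact: cvgc_add.
by apply: cvgc_ext IH => n; rewrite big_cons Pa.
Qed.

Lemma cvgc_prod (I : Type) (s : seq I) (P : pred I) (F : nat -> I -> C) (G : I -> C) :
  (forall i, cvgc (fun n => F n i) (G i)) ->
  cvgc (fun n => \prod_(i <- s | P i) F n i) (\prod_(i <- s | P i) G i).
Proof.
move=> h; elim: s => [|a s IH].
  rewrite big_nil; apply: (@cvgc_ext (fun _ => 1)); last exact: cvgc_const.
  by move=> n; rewrite big_nil.
rewrite big_cons; case: ifP => Pa.
  apply: (@cvgc_ext (fun n => F n a * \prod_(i <- s | P i) F n i)).
    by move=> n; rewrite big_cons Pa.
  exact: cvgc_mul.
by apply: cvgc_ext IH => n; rewrite big_cons Pa.
Qed.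

Lemma cvgc_det k (A : nat -> 'M[C]_k) (B : 'M[C]_k) :
  (forall i j, cvgc (fun n => A n i j) (B i j)) ->
  cvgc (fun n => \det (A n)) (\det B).
Proof.
move=> h; rewrite /determinant; apply: cvgc_sum => s.
apply: cvgc_mul; first exact: cvgc_const.
by apply: cvgc_prod => i; apply: h.
Qed.

Lemma cvgc_neq0 u l : cvgc u l -> l != 0 -> exists N, forall n, (N <= n)%N -> u n != 0.
Proof.
move=> hu l0; have e0 : 0 < nm l by rewrite lt_def nm_eq0 l0 nm_ge0.
have [N h] := hu _ e0; exists N => n hn; apply/eqP => un0.
by have := h n hn; rewrite un0 sub0r nmN ltxx.
Qed.

Definition tn (n : nat) : C := (n.+1%:R)^-1.

Lemma tn_neq0 n : tn n != 0.
Proof. by rewrite /tn invr_eq0 pnatr_eq0. Qed.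

Lemma cvgc_tn : cvgc tn 0.
Proof.
move=> e e0; have he : 0 <= e^-1 by rewrite invr_ge0 ltW.
exists (Num.bound e^-1) => n hn.
rewrite subr0 /tn /nm normfV ger0_norm ?ler0n //.
have -> : ((n.+1)%:R : C) = ((n.+1)%:R : R)%:C by rewrite rmorph_nat.
rewrite -rmorphV ?unitfE ?pnatr_eq0 //=.
have := archi_boundP he.
have : ((Num.bound e^-1)%:R : R) <= n%:R by rewrite ler_nat.
rewrite -[n.+1]addn1 natrD => h1 h2.
rewrite /= -[e]invrK ltf_pV2 ?posrE ?invr_gt0 //; first by lra.
by have := ler0n R n; lra.
Qed.
End Cvg.



Section Flat.
Local Open Scope ring_scope.
Local Open Scope complex_scope.
Variable R : realType.
Local Notation C := R[i].

Lemma mxrankD_le p q (A B : 'M[C]_(p, q)) : (\rank (A + B)%R <= \rank A + \rank B)%N.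
Proof.
apply: (leq_trans (mxrankS (addmx_sub_adds (submx_refl A) (submx_refl B)))).
by case: (mxrank_adds_leqif A B).
Qed.

Lemma mxrank_sum_le p q (I : Type) (r : seq I) (P : pred I) (A : I -> 'M[C]_(p, q)) :
  (\rank (\sum_(i <- r | P i) A i)%R <= \sum_(i <- r | P i) \rank (A i))%N.
Proof.
elim: r => [|a r IH]; first by rewrite !big_nil mxrank0.
rewrite !big_cons; case: ifP => // _.
by apply: (leq_trans (mxrankD_le _ _)); rewrite leq_add2l.
Qed.

Definition epsz (p b g : nat) : int :=
  match p, b, g with
  | 0, 1, 2 | 1, 2, 0 | 2, 0, 1 => 1
  | 0, 2, 1 | 2, 1, 0 | 1, 0, 2 => -1
  | _, _, _ => 0 end.

Lemma epsz_anti p b g : epsz p b g = - epsz p g b.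
Proof.
by case: p => [|[|[|p]]]; case: b => [|[|[|b]]]; case: g => [|[|[|g]]].
Qed.

Definition phin (y : ('I_2 * 'I_2)%type) : nat := (2 - y.1 - y.2)%N.
Definition eps3 (p : nat) (b g : 'I_3) : C := (epsz p b g)%:~R.

Variable m : nat.
Definition RT := ({p : ('I_m * 'I_2)%type | notX11 m p} * 'I_3)%type.
Definition CT := ('I_3 * ('I_2 * 'I_m))%type.

Definition kf (S : tensor R {p : ('I_m * 'I_2)%type | notX11 m p} ('I_2 * 'I_2)%type ('I_2 * 'I_m)%type)
  (x : RT) (w : CT) : C :=
  \sum_(y : 'I_2 * 'I_2) S x.1 y w.2 * eps3 (phin y) x.2 w.1.

Definition KM S : 'M[C]_(#|{: RT}|, #|{: CT}|) :=
  \matrix_(i, j) kf S (enum_val i) (enum_val j).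


Local Notation IA := {p : ('I_m * 'I_2)%type | notX11 m p}.
Local Notation IY := ('I_2 * 'I_2)%type.
Local Notation IZ := ('I_2 * 'I_m)%type.

Definition Wm (b : IY -> C) : 'M[C]_3 :=
  \matrix_(be, ga) \sum_(y : IY) b y * eps3 (phin y) be ga.

Lemma Wm_tr b : (Wm b)^T = - Wm b.
Proof.
apply/matrixP => be ga; rewrite !mxE -sumrN; apply: eq_bigr => y _.
by rewrite /eps3 epsz_anti mulrNz mulrN.
Qed.

Lemma Wm_det b : \det (Wm b) = 0.
Proof.
have h : \det (Wm b) = - \det (Wm b).
  rewrite -{1}det_tr Wm_tr -scaleN1r detZ.
  by rewrite exprS expr2 !mulN1r opprK mulNr mul1r.
have : \det (Wm b) *+ 2 == 0 by rewrite mulr2n {1}h addNr.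
by rewrite mulrn_eq0 /= => /eqP.
Qed.

Lemma Wm_rank b : (\rank (Wm b) <= 2)%N.
Proof.
have := rank_leq_row (Wm b); rewrite leq_eqVlt => /orP[/eqP h|] //.
have : row_free (Wm b) by rewrite /row_free h.
by rewrite row_free_unit unitmxE Wm_det unitr0.
Qed.

Definition Emx (a : IA -> C) : 'M[C]_(#|{: RT}|, 3) :=
  \matrix_(i, be) (a (enum_val i).1 * ((enum_val i).2 == be)%:R).
Definition Qmx (c : IZ -> C) : 'M[C]_(3, #|{: CT}|) :=
  \matrix_(ga, j) (((enum_val j).1 == ga)%:R * c (enum_val j).2).

Lemma KM_r1 (a : IA -> C) (b : IY -> C) (c : IZ -> C) : KM (fun x y z => (a x * b y * c z)%R) = Emx a *m Wm b *m Qmx c.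
Proof.
apply/matrixP => i j; rewrite !mxE.
rewrite (bigD1 (enum_val j).1) //= big1 => [|ga hga]; last first.
  by rewrite !mxE eq_sym (negbTE hga) mul0r mulr0.
rewrite !mxE eqxx mul1r addr0.
rewrite (bigD1 (enum_val i).2) //= big1 => [|be hbe]; last first.
  by rewrite !mxE eq_sym (negbTE hbe) mulr0 mul0r.
rewrite !mxE eqxx mulr1 addr0 /kf big_distrr big_distrl /=.
by apply: eq_bigr => y _; ring.
Qed.

Lemma KM_r1_rank (a : IA -> C) (b : IY -> C) (c : IZ -> C) : (\rank (KM (fun x y z => (a x * b y * c z)%R)) <= 2)%N.
Proof.
rewrite KM_r1; apply: (leq_trans (mxrankM_maxl _ _)).
apply: (leq_trans (mxrankM_maxr _ _)); exact: Wm_rank.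
Qed.

Lemma KM_rank_le S r : rank_le S r -> (\rank (KM S) <= 2 * r)%N.
Proof.
case=> a [b [c h]].
have -> : KM S = (\sum_(l < r) KM (fun x y z => (a l x * b l y * c l z)%R))%R.
  apply/matrixP => i j; rewrite summxE !mxE /kf.
  under eq_bigr do rewrite h big_distrl /=.
  rewrite exchange_big /=; apply: eq_bigr => l _; by rewrite mxE.
apply: (leq_trans (mxrank_sum_le _ _ _)).
apply: (@leq_trans (\sum_(l < r) 2)%N); first by apply: leq_sum => l _; exact: KM_r1_rank.
by rewrite sum_nat_const card_ord mulnC.
Qed.


Lemma KM_cvg (Tn : nat -> tensor R IA IY IZ) T :
  (forall x y z, cvgc (fun n => Tn n x y z) (T x y z)) ->
  forall i j, cvgc (fun n => KM (Tn n) i j) (KM T i j).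
Proof.
move=> h i j; rewrite mxE; apply: (@cvgc_ext _ (fun n => kf (Tn n) (enum_val i) (enum_val j))).
  by move=> n; rewrite mxE.
rewrite /kf; apply: cvgc_sum => y; apply: cvgc_mul => //; exact: cvgc_const.
Qed.

Lemma lower_bound (Tn : nat -> tensor R IA IY IZ) T r :
  row_free (KM T) ->
  (forall x y z, cvgc (fun n => Tn n x y z) (T x y z)) ->
  (forall n, rank_le (Tn n) r) -> (#|{: RT}| <= 2 * r)%N.
Proof.
move=> /row_freeP [B hB] hc hr.
pose An n := KM (Tn n) *m B.
have cA : forall i j, cvgc (fun n => An n i j) ((1%:M : 'M[C]_#|{: RT}|) i j).
  move=> i j; rewrite -hB mxE.
  apply: (@cvgc_ext _ (fun n => \sum_k KM (Tn n) i k * B k j)).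
    by move=> n; rewrite /An mxE.
  apply: cvgc_sum => k; apply: cvgc_mul; [exact: KM_cvg | exact: cvgc_const].
have h1 : \det (1%:M : 'M[C]_#|{: RT}|) != 0 by rewrite det1 oner_eq0.
have [N hN] := cvgc_neq0 (cvgc_det cA) h1.
have hu : An N \in unitmx by rewrite unitmxE unitfE; apply: hN.
rewrite -(mxrank_unit hu); apply: (leq_trans (mxrankM_maxl _ _)).
exact: KM_rank_le.
Qed.

End Flat.



Section Spec.
Local Open Scope ring_scope.
Local Open Scope complex_scope.
Variable R : realType.
Local Notation C := R[i].
Variable m : nat.
Local Notation IA := {p : ('I_m * 'I_2)%type | notX11 m p}.
Local Notation IY := ('I_2 * 'I_2)%type.
Local Notation IZ := ('I_2 * 'I_m)%type.

Lemma Mmm22E (x : ('I_m * 'I_2)%type) (y : IY) (z : IZ) :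
  Mmm22 R m x y z = ((y == (x.2, z.1)) && (z.2 == x.1))%:R.
Proof.
rewrite /Mmm22 (bigD1 z.1) //= [X in _ + X]big1 => [|k hk]; last first.
  apply: big1 => j _; apply: big1 => i _.
  case: z hk => z1 z2 /= hk.
  by rewrite [(z1, z2) == _]xpair_eqE (eq_sym z1) (negbTE hk) !andbF.
rewrite addr0 (bigD1 x.2) //= [X in _ + X]big1 => [|j hj]; last first.
  apply: big1 => i _; case: x hj => x1 x2 /= hj.
  by rewrite [(x1, x2) == _]xpair_eqE (eq_sym x2) (negbTE hj) /= andbF.
rewrite addr0 (bigD1 x.1) //= [X in _ + X]big1 => [|i hi]; last first.
  case: x hi => x1 x2 /= hi.
  by rewrite [(x1, x2) == _]xpair_eqE (eq_sym x1) (negbTE hi).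
rewrite addr0; case: x => x1 x2; case: z => z1 z2 /=.
by rewrite !xpair_eqE !eqxx.
Qed.

Lemma corr0 (x : IA) y z : corrBCLRS R m (val x) y z = 0.
Proof.
case: x => [[x1 x2] /= hx]; rewrite /corrBCLRS /=.
by move: hx; rewrite /notX11 /= xpair_eqE negb_and => /orP[] /negbTE ->; rewrite ?andbF mul0r.
Qed.

Lemma TE (x : IA) y z :
  T_BCLRS R m x y z = ((y == ((val x).2, z.1)) && (z.2 == (val x).1))%:R.
Proof. by rewrite /T_BCLRS Mmm22E corr0 subr0. Qed.

Lemma kfTE (x : RT m) (w : CT m) : kf (T_BCLRS R m) x w =
  (nat_of_ord w.2.2 == nat_of_ord (val x.1).1)%:R * eps3 R (2 - (val x.1).2 - w.2.1) x.2 w.1.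
Proof.
rewrite /kf (bigD1 ((val x.1).2, w.2.1)) //= [X in _ + X]big1 => [|y hy]; last first.
  by rewrite TE (negbTE hy) mul0r.
by rewrite TE eqxx /= addr0.
Qed.


Lemma RTeq (x x0 : RT m) : val x.1 = val x0.1 -> x.2 = x0.2 -> x = x0.
Proof.
case: x x0 => [[p pf] b] [[p0 pf0] b0] /= e1 e2; subst.
by rewrite (bool_irrelevance pf pf0).
Qed.

Lemma RTeq' (x x0 : RT m) : nat_of_ord (val x.1).1 = (val x0.1).1 ->
  nat_of_ord (val x.1).2 = (val x0.1).2 -> nat_of_ord x.2 = x0.2 -> x = x0.
Proof.
move=> e1 e2 e3; apply: RTeq; last exact: val_inj.
by case: (val x.1) (val x0.1) e1 e2 => a b [a0 b0] /= /val_inj -> /val_inj ->.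
Qed.

Lemma KM_T_free : row_free (KM (T_BCLRS R m)).
Proof.
apply: inj_row_free => v hv.
pose f := fun x : RT m => v 0 (enum_rank x).
have E : forall w : CT m, \sum_(x : RT m) f x * kf (T_BCLRS R m) x w = 0.
  move=> w; move/matrixP: hv => /(_ 0 (enum_rank w)); rewrite !mxE /=.
  rewrite (reindex (@enum_rank _)) /=; last first.
    by exists enum_val => x _; [rewrite enum_rankK | rewrite enum_valK].
  by under eq_bigr do rewrite mxE !enum_rankK.
have kill : forall (w : CT m) (x0 : RT m),
    (forall x, x != x0 -> f x * kf (T_BCLRS R m) x w = 0) ->
    kf (T_BCLRS R m) x0 w != 0 -> f x0 = 0.
  move=> w x0 h nz; have := E w; rewrite (bigD1 x0) //= big1 ?addr0 //.
  by move/eqP; rewrite mulf_eq0 (negbTE nz) orbF => /eqP.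
have T1 : forall x : RT m, nat_of_ord (val x.1).2 = 0%N -> nat_of_ord x.2 = 0%N -> f x = 0.
  move=> x0 h2 hb; apply: (kill (@Ordinal 3 1 isT, (@Ordinal 2 0 isT, (val x0.1).1)) x0); last first.
    by rewrite kfTE /= eqxx /eps3 h2 hb /= mul1r intr_eq0.
  move=> [[[i' [[|[|j']] hj]] pf'] [[|[|[|b]]] hb']] hne //; rewrite kfTE /=;
    case: eqP => [ei|_]; rewrite ?mul0r ?mulr0 //; rewrite /eps3;
    first [ by rewrite (_ : epsz _ _ _ = 0) // mulr0z mulr0
          | by exfalso; move/eqP: hne; apply; apply: RTeq' => /=; rewrite ?h2 ?hb ?ei
           ].
have T2 : forall x : RT m, nat_of_ord (val x.1).2 = 1%N -> nat_of_ord x.2 = 0%N -> f x = 0.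
  move=> x0 h2 hb; apply: (kill (@Ordinal 3 2 isT, (@Ordinal 2 0 isT, (val x0.1).1)) x0); last first.
    by rewrite kfTE /= eqxx /eps3 h2 hb /= mul1r intr_eq0.
  move=> [[[i' [[|[|j']] hj]] pf'] [[|[|[|b]]] hb']] hne //; rewrite kfTE /=;
    case: eqP => [ei|_]; rewrite ?mul0r ?mulr0 //; rewrite /eps3;
    first [ by rewrite (_ : epsz _ _ _ = 0) // mulr0z mulr0
          | by exfalso; move/eqP: hne; apply; apply: RTeq' => /=; rewrite ?h2 ?hb ?ei
           ].
have T3 : forall x : RT m, nat_of_ord (val x.1).2 = 0%N -> nat_of_ord x.2 = 2%N -> f x = 0.
  move=> x0 h2 hb; apply: (kill (@Ordinal 3 0 isT, (@Ordinal 2 1 isT, (val x0.1).1)) x0); last first.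
    by rewrite kfTE /= eqxx /eps3 h2 hb /= mul1r intr_eq0.
  move=> [[[i' [[|[|j']] hj]] pf'] [[|[|[|b]]] hb']] hne //; rewrite kfTE /=;
    case: eqP => [ei|_]; rewrite ?mul0r ?mulr0 //; rewrite /eps3;
    first [ by rewrite (_ : epsz _ _ _ = 0) // mulr0z mulr0
          | by exfalso; move/eqP: hne; apply; apply: RTeq' => /=; rewrite ?h2 ?hb ?ei
           ].
have T4 : forall x : RT m, nat_of_ord (val x.1).2 = 1%N -> nat_of_ord x.2 = 2%N -> f x = 0.
  move=> x0 h2 hb; apply: (kill (@Ordinal 3 1 isT, (@Ordinal 2 1 isT, (val x0.1).1)) x0); last first.
    by rewrite kfTE /= eqxx /eps3 h2 hb /= mul1r intr_eq0.
  move=> [[[i' [[|[|j']] hj]] pf'] [[|[|[|b]]] hb']] hne //; rewrite kfTE /=;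
    case: eqP => [ei|_]; rewrite ?mul0r ?mulr0 //; rewrite /eps3;
    first [ by rewrite (_ : epsz _ _ _ = 0) // mulr0z mulr0
          | by exfalso; move/eqP: hne; apply; apply: RTeq' => /=; rewrite ?h2 ?hb ?ei
           ].
have T5 : forall x : RT m, nat_of_ord (val x.1).2 = 0%N -> nat_of_ord x.2 = 1%N -> f x = 0.
  move=> x0 h2 hb; apply: (kill (@Ordinal 3 0 isT, (@Ordinal 2 0 isT, (val x0.1).1)) x0); last first.
    by rewrite kfTE /= eqxx /eps3 h2 hb /= mul1r intr_eq0.
  move=> [[[i' [[|[|j']] hj]] pf'] [[|[|[|b]]] hb']] hne //; rewrite kfTE /=;
    case: eqP => [ei|_]; rewrite ?mul0r ?mulr0 //; rewrite /eps3;
    first [ by rewrite (_ : epsz _ _ _ = 0) // mulr0z mulr0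
          | by exfalso; move/eqP: hne; apply; apply: RTeq' => /=; rewrite ?h2 ?hb ?ei
          | by rewrite T4 ?mul0r ].
have T6 : forall x : RT m, nat_of_ord (val x.1).2 = 1%N -> nat_of_ord x.2 = 1%N -> f x = 0.
  move=> x0 h2 hb; apply: (kill (@Ordinal 3 2 isT, (@Ordinal 2 1 isT, (val x0.1).1)) x0); last first.
    by rewrite kfTE /= eqxx /eps3 h2 hb /= mul1r intr_eq0.
  move=> [[[i' [[|[|j']] hj]] pf'] [[|[|[|b]]] hb']] hne //; rewrite kfTE /=;
    case: eqP => [ei|_]; rewrite ?mul0r ?mulr0 //; rewrite /eps3;
    first [ by rewrite (_ : epsz _ _ _ = 0) // mulr0z mulr0
          | by exfalso; move/eqP: hne; apply; apply: RTeq' => /=; rewrite ?h2 ?hb ?ei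
          | by rewrite T1 ?mul0r ].
apply/rowP => i; rewrite mxE.
have := enum_valK i; move: (enum_val i) => x <-.
case: x => [[[i' [[|[|j']] hj]] pf'] [[|[|[|b]]] hb']] //.
- by apply: T1.
- by apply: T5.
- by apply: T3.
- by apply: T2.
- by apply: T6.
- by apply: T4.
Qed.

End Spec.



Section Upper.
Local Open Scope ring_scope.
Local Open Scope complex_scope.
Variable R : realType.
Local Notation C := R[i].

Lemma ev_fin (T : finType) (P : T -> nat -> Prop) :
  (forall t, exists N, forall n, (N <= n)%N -> P t n) ->
  exists N, forall t n, (N <= n)%N -> P t n.
Proof.
move=> h.
suff [N hN] : exists N, forall t, t \in enum T -> forall n, (N <= n)%N -> P t n.
  by exists N => t n; apply: hN; rewrite mem_enum.
elim: (enum T) => [|a s [N IH]]; first by exists 0%N.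
have [Na ha] := h a; exists (maxn N Na) => t; rewrite in_cons => /orP[/eqP->|ts] n hn.
  by apply: ha; apply: leq_trans hn; apply: leq_maxr.
by apply: IH => //; apply: leq_trans hn; apply: leq_maxl.
Qed.

Lemma cvgc_tensor (IA IB IC : finType) (Tn : nat -> tensor R IA IB IC) T :
  (forall x y z, cvgc (fun n => Tn n x y z) (T x y z)) -> tensor_cvg Tn T.
Proof.
move=> h e e0.
have [N hN] := @ev_fin (IA * IB * IC)%type
  (fun t n => nm (Tn n t.1.1 t.1.2 t.2 - T t.1.1 t.1.2 t.2) < e)
  (fun t => h t.1.1 t.1.2 t.2 e e0).
exists N => n hn x y z; rewrite normE ltcR; exact: (hN (x, y, z) n hn).
Qed.

Lemma tensor_cvgc (IA IB IC : finType) (Tn : nat -> tensor R IA IB IC) T :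
  tensor_cvg Tn T -> forall x y z, cvgc (fun n => Tn n x y z) (T x y z).
Proof.
move=> h x y z e e0; have [N hN] := h e e0; exists N => n hn.
by rewrite -ltcR -normE; apply: hN.
Qed.


Definition pa (l i j : nat) : int :=
  match l, i, j with
  | 0, 1, 0 | 1, 0, 1 | 4, 1, 0 | 4, 0, 1 => 1
  | 2, 1, 0 | 3, 0, 1 => -1
  | _, _, _ => 0 end.
Definition qa (l i j : nat) : int :=
  match l, i, j with
  | 0, 1, 1 | 1, 1, 1 => 1
  | _, _, _ => 0 end.
Definition pb (l j k : nat) : int :=
  match l, j, k with
  | 0, 1, 0 | 1, 1, 1 | 2, 1, 0 | 3, 1, 1 | 3, 1, 0 | 4, 1, 0 => 1
  | _, _, _ => 0 end.
Definition qb (l j k : nat) : int :=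
  match l, j, k with
  | 0, 0, 0 | 3, 0, 1 | 4, 0, 1 => 1
  | _, _, _ => 0 end.
Definition pc (l k i : nat) : int :=
  match l, k, i with
  | 0, 0, 1 | 1, 1, 1 | 2, 1, 1 | 2, 0, 1 | 3, 1, 1 | 4, 1, 1 => 1
  | _, _, _ => 0 end.
Definition qc (l k i : nat) : int :=
  match l, k, i with
  | 1, 1, 0 | 2, 0, 0 | 4, 0, 0 => 1
  | _, _, _ => 0 end.

Definition sum5 (F : nat -> int) : int := F 0%N + F 1%N + F 2%N + F 3%N + F 4%N.

Definition S0 i j j2 k k2 i2 := sum5 (fun l => pa l i j * pb l j2 k * pc l k2 i2).
Definition S1 i j j2 k k2 i2 := sum5 (fun l => qa l i j * pb l j2 k * pc l k2 i2
   + pa l i j * qb l j2 k * pc l k2 i2 + pa l i j * pb l j2 k * qc l k2 i2).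
Definition S2 i j j2 k k2 i2 := sum5 (fun l => qa l i j * qb l j2 k * pc l k2 i2
   + qa l i j * pb l j2 k * qc l k2 i2 + pa l i j * qb l j2 k * qc l k2 i2).
Definition S3 i j j2 k k2 i2 := sum5 (fun l => qa l i j * qb l j2 k * qc l k2 i2).

Lemma S_check (i j j2 k k2 i2 : nat) : (i < 2)%N -> (j < 2)%N -> (j2 < 2)%N ->
  (k < 2)%N -> (k2 < 2)%N -> (i2 < 2)%N -> (i, j) != (0, 0)%N ->
  S0 i j j2 k k2 i2 = 0 /\ S1 i j j2 k k2 i2 = ((j2 == j) && (k == k2) && (i2 == i) : nat).
Proof.
by case: i => [|[|i]] //; case: j => [|[|j]] //; case: j2 => [|[|j2]] //;
  case: k => [|[|k]] //; case: k2 => [|[|k2]] //; case: i2 => [|[|i2]].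
Qed.

Local Notation IA := {p : ('I_2 * 'I_2)%type | notX11 2 p}.
Local Notation IY := ('I_2 * 'I_2)%type.
Local Notation IZ := ('I_2 * 'I_2)%type.

Definition an n (l : 'I_5) (x : IA) : C :=
  (tn R n)^-1 * ((pa l (val x).1 (val x).2)%:~R + tn R n * (qa l (val x).1 (val x).2)%:~R).
Definition bn n (l : 'I_5) (y : IY) : C :=
  (pb l y.1 y.2)%:~R + tn R n * (qb l y.1 y.2)%:~R.
Definition cn n (l : 'I_5) (z : IZ) : C :=
  (pc l z.1 z.2)%:~R + tn R n * (qc l z.1 z.2)%:~R.

Definition Tn n : tensor R IA IY IZ :=
  fun x y z => \sum_(l < 5) an n l x * bn n l y * cn n l z.

Lemma Tn_decomp n x y z : Tn n x y z =
  (tn R n)^-1 * (S0 (val x).1 (val x).2 y.1 y.2 z.1 z.2)%:~R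
  + (S1 (val x).1 (val x).2 y.1 y.2 z.1 z.2)%:~R
  + tn R n * (S2 (val x).1 (val x).2 y.1 y.2 z.1 z.2)%:~R
  + tn R n ^+ 2 * (S3 (val x).1 (val x).2 y.1 y.2 z.1 z.2)%:~R.
Proof.
rewrite /Tn !big_ord_recr big_ord0 /= /S0 /S1 /S2 /S3 /sum5 /an /bn /cn /=.
rewrite !(intrD, intrM).
have := tn_neq0 R n; move: (tn R n) => t t0.
by field.
Qed.


Lemma Tn_cvg x y z : cvgc (fun n => Tn n x y z) (T_BCLRS R 2 x y z).
Proof.
have [h0 h1] : (S0 (val x).1 (val x).2 y.1 y.2 z.1 z.2 = 0) /\
    (S1 (val x).1 (val x).2 y.1 y.2 z.1 z.2 =
    ((nat_of_ord y.1 == nat_of_ord (val x).2) && (nat_of_ord y.2 == nat_of_ord z.1) && (nat_of_ord z.2 == nat_of_ord (val x).1) : nat)).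
  case: x => [[x1 x2] hx]; case: y => y1 y2; case: z => z1 z2 /=.
  by apply: S_check.
pose c1 : C := (S1 (val x).1 (val x).2 y.1 y.2 z.1 z.2)%:~R.
pose c2 : C := (S2 (val x).1 (val x).2 y.1 y.2 z.1 z.2)%:~R.
pose c3 : C := (S3 (val x).1 (val x).2 y.1 y.2 z.1 z.2)%:~R.
apply: (@cvgc_ext _ (fun n => 0 + c1 + tn R n * c2 + tn R n * tn R n * c3)).
  by move=> n; rewrite Tn_decomp h0 mulr0 expr2.
have -> : T_BCLRS R 2 x y z = 0 + c1 + 0 * c2 + 0 * 0 * c3.
  rewrite mul0r !mul0r !addr0 add0r TE /c1 h1; clear h0 h1 c1 c2 c3.
  move: (val x) => [x1 x2]; case: y => y1 y2; case: z => z1 z2 /=.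
  by rewrite xpair_eqE.
apply: cvgc_add; [apply: cvgc_add|].
- apply: cvgc_add; exact: cvgc_const.
- apply: cvgc_mul; [exact: cvgc_tn | exact: cvgc_const].
- apply: cvgc_mul; [apply: cvgc_mul; exact: cvgc_tn | exact: cvgc_const].
Qed.

Lemma upper5 : border_rank_le (T_BCLRS R 2) 5.
Proof.
exists Tn; split; last by apply: cvgc_tensor; exact: Tn_cvg.
by move=> n; exists (an n), (bn n), (cn n).
Qed.

End Upper.



Section Final.
Variable R : realType.

Lemma card_IA m (hm : (0 < m)%N) :
  #|{: {p : ('I_m * 'I_2)%type | notX11 m p}}| = (2 * m - 1)%N.
Proof.
rewrite card_sig (eq_card (B := predC1 (Ordinal hm, (ord0 : 'I_2)))).
  by rewrite cardC1 card_prod !card_ord mulnC subn1.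
move=> [i j]; rewrite !inE /notX11 /= !xpair_eqE.
by [].
Qed.

Lemma lower_main m r : (0 < m)%N -> border_rank_le (T_BCLRS R m) r ->
  (3 * (2 * m - 1) <= 2 * r)%N.
Proof.
move=> hm [Tn [hr hc]].
have := lower_bound (KM_T_free R m) (tensor_cvgc hc) hr.
by rewrite card_prod card_IA // card_ord mulnC.
Qed.

End Final.

Theorem mainTheorem1 (R : realType) :
  is_border_rank (T_BCLRS R 2) 5 /\
  (forall m : nat, (2 < m)%N ->
     forall r : nat, border_rank_le (T_BCLRS R m) r -> (3 * m - 2 <= r)%N).
Proof.
split.
  split; first exact: upper5.
  move=> r h; have := lower_main (m := 2) isT h; lia.
move=> m hm r h; have := lower_main (ltnW (ltnW hm)) h; lia.
Qed.
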